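(* Let $P$ be a shrub on a finite set $I$ with at least two elements. Then $P$ has a leaf or two distinct correlated vertices.
   Context: A shrub $P$ on a finite set $I$ is a set $E$ of edges (unordered pairs $\{i,j\}$ of distinct elements of $I$) together with a height function $h_P:I\to\mathbb{N}$. Say that $j$ covers $i$ if $\{i,j\}\in E$ and $h_P(j)=h_P(i)+1$. The axioms are: (1) if $\{i,j\}\in E$ then $h_P(i)=h_P(j)\pm 1$; (2) if $h_P(j)>0$ then there is an edge $\{i,j\}$ with $h_P(i)=h_P(j)-1$; (3) there are no four distinct vertices $a,b,c,d$ such that $a$ covers $b$ and $c$, $c$ covers $d$, and $\{b,d\}\notin E$; (4) there are no five distinct vertices $a,b,c,d,e$ such that $a$ covers $c$ and $d$, $b$ covers $d$ and $e$, $\{a,e\}\notin E$ and $\{b,c\}\notin E$. A leaf is a vertex that covers exactly one vertex and is covered by no vertex. Two vertices $i,j$ are correlated if the set of vertices covering $i$ equals the set of vertices covering $j$, and the set of vertices covered by $i$ equals the set of vertices covered by $j$. *)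

(* Defs.v *)
From mathcomp Require Import all_boot.
Set Implicit Arguments. Unset Strict Implicit. Unset Printing Implicit Defensive.

(* A shrub on a finite set I: an edge set E (unordered pairs of distinct
   elements, encoded as a symmetric irreflexive boolean relation) together
   with a height function h : I -> nat. *)

Section Shrub.
Variable I : finType.
Variables (E : rel I) (h : I -> nat).

Definition covers (j i : I) : bool := E i j && (h j == (h i).+1).

Definition is_shrub : Prop :=
  (forall i j, E i j = E j i) /\
  (forall i, ~~ E i i) /\
      (forall i j, E i j -> h i = (h j).+1 \/ h j = (h i).+1) /\
      (forall j, 0 < h j -> exists i, E i j /\ h i = (h j).-1) /\
      (* axiom (3) *)
      (forall a b c d : I, uniq [:: a; b; c; d] ->
          covers a b -> covers a c -> covers c d -> E b d) /\
      (* axiom (4) *)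
      (forall a b c d e : I, uniq [:: a; b; c; d; e] ->
          covers a c -> covers a d -> covers b d -> covers b e ->
          E a e \/ E b c).

Definition leaf (v : I) : Prop :=
  #|[set u | covers v u]| = 1 /\ [set u | covers u v] = set0.

Definition correlated (i j : I) : Prop :=
  [set u | covers u i] = [set u | covers u j] /\
  [set u | covers i u] = [set u | covers j u].

End Shrub.

(* Main.v *)
Require Import Defs.
From mathcomp Require Import all_boot.

Theorem mainTheorem3 (I : finType) (E : rel I) (h : I -> nat) :
  is_shrub E h -> 2 <= #|I| ->
  (exists v : I, leaf E h v) \/
  (exists i j : I, i <> j /\ correlated E h i j).
Proof.
move=> [Esym [Eirr [H1 [H2 [H3 H4]]]]] cardI.
have [i0 _] : exists i0 : I, True.
  by case/card_gt1P: cardI => x [y [_ _ _]]; exists x.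
have covh : forall u v, covers E h u v -> h u = (h v).+1.
  by move=> u v /andP[_ /eqP].
have hne : forall u v, h u != h v -> u != v.
  by move=> u v; apply: contraNneq => ->.
case: (@arg_maxnP I i0 predT h isT) => a0 _ a0max.
set m := h a0 in a0max.
have hmax : forall j, h j <= m by move=> j; exact: a0max.
case: (posnP m) => [m0 | mpos].
  right; case/card_gt1P: cardI => x [y [_ _ xy]].
  exists x, y; split; first exact/eqP.
  have nc : forall u v, covers E h u v = false.
    move=> u v; apply/negbTE/negP => /covh huv.
    by move: (hmax u); rewrite huv m0.
  by split; apply/setP => u; rewrite !inE !nc.
pose D x := [set u | covers E h x u].
have a0m : h a0 == m by [].
case: (@arg_minnP I a0 (fun x => h x == m) (fun x => #|D x|) a0m) => a /eqP am amin.
have cova : forall c, covers E h a c -> (h c).+1 = m.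
  by move=> c /covh; rewrite am.
have key : forall x, h x = m -> forall c, covers E h a c -> covers E h x c ->
    forall e, covers E h a e -> covers E h x e.
  move=> x xm c ac xc e ae.
  case xe: (covers E h x e) => //; exfalso.
  case: (boolP (D x \subset D a)) => [sub | /subsetPn [c' c'x c'a]].
    have : D x == D a by rewrite eqEcard sub amin //; apply/eqP.
    move/eqP => eqD.
    have : e \in D a by rewrite inE.
    by rewrite -eqD inE xe.
  rewrite !inE in c'x c'a.
  have hc' := covh _ _ c'x; have hc := cova _ ac; have he := cova _ ae.
  have hcc : (h c).+1 = m by [].
  have hc'm : (h c').+1 = m by rewrite -hc' xm.
  have ne_m : forall u v, (h v).+1 = m -> h u = m -> u != v.
    move=> u v hv hu; apply: hne; rewrite hu -hv; by rewrite eq_sym ltn_eqF.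
  have ax : a != x by apply: contraNneq c'a => ->.
  have ec : e != c by apply: contraFneq xe => ->.
  have ec' : e != c' by apply: contraNneq c'a => <-.
  have cc' : c != c' by apply: contraNneq c'a => <-.
  have U : uniq [:: a; x; e; c; c'].
    rewrite /= !inE !negb_or ax ec ec' cc' /=.
    rewrite (ne_m a e he am) (ne_m a c hcc am) (ne_m a c' hc'm am).
    rewrite (ne_m x e he xm) (ne_m x c hcc xm) (ne_m x c' hc'm xm) //.
  case: (H4 a x e c c' U ae ac xc c'x) => Hq.
    by move: c'a; rewrite /covers Esym Hq am -hc' xm eqxx.
  by move: xe; rewrite /covers Esym Hq xm -he eqxx.
case: (leqP #|D a| 1) => [Dle | Dgt].
  left; exists a; split.
    apply/eqP; rewrite eqn_leq Dle /=.
    have [i [Eia hi]] : exists i, E i a /\ h i = (h a).-1 by apply: H2; rewrite am.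
    apply/card_gt0P; exists i; rewrite inE /covers Eia hi am prednK //.
  apply/setP => u; rewrite !inE; apply/negbTE/negP => /covh hu.
  by move: (hmax u); rewrite hu am ltnn.
right; case/card_gt1P: Dgt => c1 [c2 [c1a c2a c12]].
rewrite !inE in c1a c2a.
exists c1, c2; split; first exact/eqP.
have up : forall c c', covers E h a c -> covers E h a c' ->
    forall u, covers E h u c -> covers E h u c'.
  move=> c c' ac ac' u uc; apply: (key u _ c ac uc c' ac').
  by rewrite (covh _ _ uc) (cova _ ac).
have down : forall c c', c != c' -> covers E h a c -> covers E h a c' ->
    forall d, covers E h c' d -> covers E h c d.
  move=> c c' cc' ac ac' d c'd.
  have hc := cova _ ac; have hc' := cova _ ac'; have hd := covh _ _ c'd.
  have hcd : h c = (h d).+1 by rewrite -hd; apply: succn_inj; rewrite hc hc'.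
  have U : uniq [:: a; c; c'; d].
    rewrite /= !inE !negb_or cc' /= !andbT.
    have n1 : forall u v, h u = (h v).+1 -> u != v.
      by move=> u v huv; apply: hne; rewrite huv eq_sym ltn_eqF.
    rewrite (n1 a c) ?am // (n1 a c') ?am // (n1 c d) //.
    rewrite (n1 c' d) //=.
    by rewrite andbT; apply: hne; rewrite am -hc' hd eq_sym (ltn_eqF (leqnSn _)).
  have Ecd := H3 a c c' d U ac ac' c'd.
  by rewrite /covers Esym Ecd /= hcd eqxx.
split; apply/setP => u; rewrite !inE; apply/idP/idP.
- exact: up.
- exact: up.
- by apply: down => //; rewrite eq_sym.
- exact: down.
Qed.
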